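(* Let $x=(x_1,x_2,x_3)$ be a triple of distinct points of $\partial H^n_{\mathbb{H}}$, let $\sigma_{12}$ be the real geodesic and $\Sigma_{12}$ the quaternionic line containing $x_1,x_2$ (at infinity), and let $\Pi:\overline{H^n_{\mathbb{H}}}\to\overline{\Sigma_{12}}$ be the orthogonal projection (extended continuously to ideal points). Then $$|\tan\mathbb{A}_{\mathbb{H}}(x)|=\sinh\big(d(\Pi(x_3),\sigma_{12})\big),$$ where $d$ is the hyperbolic distance in $H^n_{\mathbb{H}}$ (both sides being $+\infty$ when $\Pi(x_3)\in\partial\Sigma_{12}$).
   Context: Quaternionic hyperbolic space $H^n_{\mathbb{H}}$ is the set of negative lines in the left $\mathbb{H}$-vector space $\mathbb{H}^{n+1}$ with form $\langle z,w\rangle=\sum_{i=1}^n z_i\bar w_i-z_{n+1}\bar w_{n+1}$, $\partial H^n_{\mathbb{H}}$ the null lines; the metric is normalized so that sectional curvature lies in $[-1,-1/4]$, so each quaternionic line is isometric to real hyperbolic 4-space of curvature $-1$. For distinct points with lifts $\tilde x_i$, the triple product is $\langle\tilde x_1,\tilde x_2\rangle\langle\tilde x_2,\tilde x_3\rangle\langle\tilde x_3,\tilde x_1\rangle\in\mathbb{H}$, and $\mathbb{A}_{\mathbb{H}}(x)\in[0,\pi/2]$ is the angle in $\mathbb{H}\cong\mathbb{R}^4$ between $\mathbb{R}\cdot 1$ and this triple product. The orthogonal projection onto $\Sigma_{12}$ maps each point to its nearest point of $\Sigma_{12}$. *)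

(* Defs.v *)
From Stdlib Require Import Reals.
From Coquelicot Require Import Coquelicot.
Open Scope R_scope.

(** * Quaternions H = R^4, basis 1, i, j, k with ij = k. *)
Record quat := Quat { qre : R; qi : R; qj : R; qk : R }.

Definition qzero : quat := Quat 0 0 0 0.
Definition qadd (a b : quat) : quat :=
  Quat (qre a + qre b) (qi a + qi b) (qj a + qj b) (qk a + qk b).
Definition qsub (a b : quat) : quat :=
  Quat (qre a - qre b) (qi a - qi b) (qj a - qj b) (qk a - qk b).
Definition qmul (a b : quat) : quat :=
  Quat (qre a * qre b - qi a * qi b - qj a * qj b - qk a * qk b)
       (qre a * qi b + qi a * qre b + qj a * qk b - qk a * qj b)
       (qre a * qj b - qi a * qk b + qj a * qre b + qk a * qi b)
       (qre a * qk b + qi a * qj b - qj a * qi b + qk a * qre b).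
Definition qconj (a : quat) : quat := Quat (qre a) (- qi a) (- qj a) (- qk a).
Definition qnorm2 (a : quat) : R :=
  qre a * qre a + qi a * qi a + qj a * qj a + qk a * qk a.
Definition qreal (a : quat) : Prop := qi a = 0 /\ qj a = 0 /\ qk a = 0.

(** A vector z = (z_1, ..., z_{n+1}) is a function nat -> quat whose
    coordinate z_m (1 <= m <= n+1) is stored at index m-1; indices > n
    are irrelevant. Scalars act on the left. *)
Definition qvec := nat -> quat.

Fixpoint qsum (m : nat) (f : nat -> quat) : quat :=
  match m with O => qzero | S m' => qadd (qsum m' f) (f m') end.

Definition herm (n : nat) (z w : qvec) : quat :=
  qsub (qsum n (fun i => qmul (z i) (qconj (w i))))
       (qmul (z n) (qconj (w n))).

Definition lincomb (a : quat) (x : qvec) (b : quat) (y : qvec) : qvec :=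
  fun i => qadd (qmul a (x i)) (qmul b (y i)).

Definition vnonzero (n : nat) (z : qvec) : Prop := exists i, (i <= n)%nat /\ z i <> qzero.

Definition same_line (n : nat) (z w : qvec) : Prop :=
  exists l : quat, l <> qzero /\ forall i, (i <= n)%nat -> w i = qmul l (z i).

(** negative vectors (lifts of points of H^n_H) and null vectors
    (lifts of points of the boundary) *)
Definition negvec (n : nat) (z : qvec) : Prop := qre (herm n z z) < 0.
Definition nullvec (n : nat) (z : qvec) : Prop :=
  vnonzero n z /\ herm n z z = qzero.

(** hyperbolic distance, normalised so that the sectional curvature lies
    in [-1,-1/4]:  cosh^2 (d(z,w)/2) = |<z,w>|^2 / (<z,z><w,w>) *)
Definition qacosh (c : R) : R := ln (c + sqrt (c * c - 1)).
Definition hdist (n : nat) (z w : qvec) : R :=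
  2 * qacosh (sqrt (qnorm2 (herm n z w) /
                    (qre (herm n z z) * qre (herm n w w)))).

Definition in_Sigma (n : nat) (x1 x2 z : qvec) : Prop :=
  negvec n z /\ exists a b : quat, same_line n (lincomb a x1 b x2) z.

(** sigma12: the real geodesic with endpoints x1, x2, i.e. the
    projectivisation of { a x1 + b x2 } with <a x1, b x2> = a <x1,x2> conj(b)
    real and negative (lifts of x1,x2 normalised to have real negative
    product, real positive coefficients). *)
Definition in_sigma (n : nat) (x1 x2 z : qvec) : Prop :=
  negvec n z /\
  exists a b : quat,
    same_line n (lincomb a x1 b x2) z /\
    qreal (qmul (qmul a (herm n x1 x2)) (qconj b)) /\
    qre (qmul (qmul a (herm n x1 x2)) (qconj b)) < 0.

Definition dist_to_sigma (n : nat) (x1 x2 p : qvec) : R :=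
  real (Glb_Rbar (fun r => exists q, in_sigma n x1 x2 q /\ r = hdist n p q)).

(** orthogonal projection onto Sigma12 of an interior point y:
    p is the nearest point of Sigma12 to y *)
Definition nearest_in_Sigma (n : nat) (x1 x2 y p : qvec) : Prop :=
  in_Sigma n x1 x2 p /\
  forall q, in_Sigma n x1 x2 q -> hdist n y p <= hdist n y q.

(** convergence of interior points y_k to the ideal point x3 in the
    closure of H^n_H (topology of quaternionic projective space):
    there are lifts of the y_k converging coordinatewise to x3 *)
Definition conv_to (n : nat) (y : nat -> qvec) (x : qvec) : Prop :=
  exists u : nat -> qvec,
    (forall k, same_line n (y k) (u k)) /\
    forall i, (i <= n)%nat ->
      is_lim_seq (fun k => qre (u k i)) (qre (x i)) /\
      is_lim_seq (fun k => qi (u k i)) (qi (x i)) /\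
      is_lim_seq (fun k => qj (u k i)) (qj (x i)) /\
      is_lim_seq (fun k => qk (u k i)) (qk (x i)).

(** triple product and quaternionic angular invariant A_H(x) in [0, pi/2]:
    the angle in H = R^4 between the line R.1 and the triple product *)
Definition triple (n : nat) (x1 x2 x3 : qvec) : quat :=
  qmul (qmul (herm n x1 x2) (herm n x2 x3)) (herm n x3 x1).
Definition angleH (n : nat) (x1 x2 x3 : qvec) : R :=
  let T := triple n x1 x2 x3 in acos (Rabs (qre T) / sqrt (qnorm2 T)).

Definition abs_tan_angleH (n : nat) (x1 x2 x3 : qvec) : Rbar :=
  let A := angleH n x1 x2 x3 in
  if Req_dec_T A (PI / 2) then p_infty else Finite (Rabs (tan A)).

(* Main.v *)
Require Import Defs.
From Stdlib Require Import Reals.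
From Coquelicot Require Import Coquelicot.
From Stdlib Require Import Lra Lia Psatz FunctionalExtensionality.
Open Scope R_scope.

Lemma quat_eq (a b : quat) : qre a = qre b -> qi a = qi b -> qj a = qj b -> qk a = qk b -> a = b.
Proof. destruct a, b; simpl; intros; subst; reflexivity. Qed.

Definition qscal (r : R) : quat := Quat r 0 0 0.
Definition qone := qscal 1.
Definition qm1 := qscal (-1).
Definition qopp (a : quat) := Quat (- qre a) (- qi a) (- qj a) (- qk a).
Definition qinv (a : quat) := qmul (qscal (/ qnorm2 a)) (qconj a).

Ltac qunf := unfold qinv, qone, qm1, qopp in *; unfold qmul, qadd, qsub, qconj, qzero, qnorm2, qscal in *; cbn [qre qi qj qk] in *.
Ltac qring := apply quat_eq; qunf; ring.

Lemma qmul_assoc a b c : qmul a (qmul b c) = qmul (qmul a b) c.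
Proof. qring. Qed.
Lemma qmul_addl a b c : qmul (qadd a b) c = qadd (qmul a c) (qmul b c).
Proof. qring. Qed.
Lemma qmul_addr a b c : qmul c (qadd a b) = qadd (qmul c a) (qmul c b).
Proof. qring. Qed.
Lemma qconj_mul a b : qconj (qmul a b) = qmul (qconj b) (qconj a).
Proof. qring. Qed.
Lemma qconj_add a b : qconj (qadd a b) = qadd (qconj a) (qconj b).
Proof. qring. Qed.
Lemma qconj_sub a b : qconj (qsub a b) = qsub (qconj a) (qconj b).
Proof. qring. Qed.
Lemma qconj_conj a : qconj (qconj a) = a.
Proof. qring. Qed.
Lemma qmul_0l a : qmul qzero a = qzero. Proof. qring. Qed.
Lemma qmul_0r a : qmul a qzero = qzero. Proof. qring. Qed.
Lemma qadd_0l a : qadd qzero a = a. Proof. qring. Qed.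
Lemma qadd_0r a : qadd a qzero = a. Proof. qring. Qed.
Lemma qnorm2_mul a b : qnorm2 (qmul a b) = qnorm2 a * qnorm2 b.
Proof. qunf; ring. Qed.
Lemma qnorm2_conj a : qnorm2 (qconj a) = qnorm2 a.
Proof. qunf; ring. Qed.
Lemma qnorm2_ge0 a : 0 <= qnorm2 a.
Proof. qunf; nra. Qed.
Lemma qnorm2_eq0 a : qnorm2 a = 0 -> a = qzero.
Proof. destruct a as [a b c d]; qunf; intro H; apply quat_eq; simpl; nra. Qed.
Lemma qnorm2_pos a : a <> qzero -> 0 < qnorm2 a.
Proof. intro H; destruct (qnorm2_ge0 a); auto. exfalso; apply H, qnorm2_eq0; auto. Qed.
Lemma qmul_inv_r a : a <> qzero -> qmul a (qinv a) = qone.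
Proof. intro H; pose proof (qnorm2_pos a H) as P. destruct a as [a b c d]; apply quat_eq; qunf; field; lra. Qed.
Lemma qmul_inv_l a : a <> qzero -> qmul (qinv a) a = qone.
Proof. intro H; pose proof (qnorm2_pos a H) as P. destruct a as [a b c d]; apply quat_eq; qunf; field; lra. Qed.
Lemma qmul_1l a : qmul qone a = a. Proof. qring. Qed.
Lemma qmul_1r a : qmul a qone = a. Proof. qring. Qed.
Lemma qre_comm a b : qre (qmul a b) = qre (qmul b a).
Proof. qunf; ring. Qed.
Lemma qre_sandwich l w : qre (qmul (qmul l w) (qconj l)) = qnorm2 l * qre w.
Proof. qunf; ring. Qed.
Lemma qmul_nz a b : a <> qzero -> b <> qzero -> qmul a b <> qzero.
Proof. intros Ha Hb E. pose proof (qnorm2_pos a Ha); pose proof (qnorm2_pos b Hb).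
  assert (qnorm2 (qmul a b) = 0) by (rewrite E; qunf; ring). rewrite qnorm2_mul in H1. nra. Qed.
Lemma qconj_nz a : a <> qzero -> qconj a <> qzero.
Proof. intros H E; apply H; rewrite <- (qconj_conj a), E; qring. Qed.

Lemma qsum_ext m f g : (forall i, (i < m)%nat -> f i = g i) -> qsum m f = qsum m g.
Proof. induction m; simpl; intros; auto. rewrite IHm by (intros; apply H; lia). rewrite H by lia; auto. Qed.
Lemma qsum_add m f g : qsum m (fun i => qadd (f i) (g i)) = qadd (qsum m f) (qsum m g).
Proof. induction m; simpl. qring. rewrite IHm. qring. Qed.
Lemma qsum_mull m a f : qsum m (fun i => qmul a (f i)) = qmul a (qsum m f).
Proof. induction m; simpl. qring. rewrite IHm. qring. Qed.
Lemma qsum_mulr m a f : qsum m (fun i => qmul (f i) a) = qmul (qsum m f) a.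
Proof. induction m; simpl. qring. rewrite IHm. qring. Qed.
Lemma qsum_conj m f : qconj (qsum m f) = qsum m (fun i => qconj (f i)).
Proof. induction m; simpl. qring. rewrite <- IHm. qring. Qed.
Lemma qsum_re_ge0 m f : (forall i, (i < m)%nat -> 0 <= qre (f i)) -> 0 <= qre (qsum m f).
Proof. induction m; simpl; intros. lra. pose proof (H m ltac:(lia)). pose proof (IHm ltac:(intros; apply H; lia)). lra. Qed.
Lemma qsum_re_eq0 m f : (forall i, (i < m)%nat -> 0 <= qre (f i)) -> qre (qsum m f) = 0 ->
  forall i, (i < m)%nat -> qre (f i) = 0.
Proof. induction m; simpl; intros. lia. pose proof (H m ltac:(lia)).
  pose proof (qsum_re_ge0 m f ltac:(intros; apply H; lia)).
  assert (i < m \/ i = m)%nat as [|] by lia. apply IHm; auto; lra. subst; lra. Qed.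

Lemma herm_ext_l n z z' w : (forall i, (i <= n)%nat -> z i = z' i) -> herm n z w = herm n z' w.
Proof. intros H; unfold herm. rewrite (qsum_ext n _ (fun i => qmul (z' i) (qconj (w i)))).
  rewrite H by lia; auto. intros; rewrite H by lia; auto. Qed.
Lemma herm_ext_r n z w w' : (forall i, (i <= n)%nat -> w i = w' i) -> herm n z w = herm n z w'.
Proof. intros H; unfold herm. rewrite (qsum_ext n _ (fun i => qmul (z i) (qconj (w' i)))).
  rewrite H by lia; auto. intros; rewrite H by lia; auto. Qed.
Lemma herm_lin_l n a x b y w :
  herm n (lincomb a x b y) w = qadd (qmul a (herm n x w)) (qmul b (herm n y w)).
Proof. unfold herm, lincomb.
  rewrite (qsum_ext n _ (fun i => qadd (qmul a (qmul (x i) (qconj (w i)))) (qmul b (qmul (y i) (qconj (w i)))))).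
  rewrite qsum_add, !qsum_mull. qring. intros; qring. Qed.
Lemma herm_conj n z w : herm n w z = qconj (herm n z w).
Proof. unfold herm. rewrite qconj_sub, qsum_conj.
  rewrite (qsum_ext n (fun i => qconj _) (fun i => qmul (w i) (qconj (z i)))). f_equal. qring. intros; qring. Qed.
Lemma herm_lin_r n a x b y w :
  herm n w (lincomb a x b y) = qadd (qmul (herm n w x) (qconj a)) (qmul (herm n w y) (qconj b)).
Proof. rewrite herm_conj, herm_lin_l, (herm_conj n w x), (herm_conj n w y). qring. Qed.
Lemma herm_scale_l n l z w : herm n (fun i => qmul l (z i)) w = qmul l (herm n z w).
Proof. rewrite (herm_ext_l n _ (lincomb l z qzero z)). rewrite herm_lin_l; qring.
  intros; unfold lincomb; qring. Qed.
Lemma herm_scale_r n l z w : herm n w (fun i => qmul l (z i)) = qmul (herm n w z) (qconj l).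
Proof. rewrite herm_conj, herm_scale_l, (herm_conj n w z). qring. Qed.
Lemma herm_self_real n z : qi (herm n z z) = 0 /\ qj (herm n z z) = 0 /\ qk (herm n z z) = 0.
Proof. pose proof (herm_conj n z z) as E. set (h := herm n z z) in *.
  assert (qi h = qi (qconj h)) by (rewrite <- E; auto).
  assert (qj h = qj (qconj h)) by (rewrite <- E; auto).
  assert (qk h = qk (qconj h)) by (rewrite <- E; auto). qunf. lra. Qed.
Lemma herm_pos n z : z n = qzero -> 0 <= qre (herm n z z) /\
  (qre (herm n z z) = 0 -> forall i, (i <= n)%nat -> z i = qzero).
Proof. intros Hz. unfold herm. rewrite Hz.
  assert (E: forall i, qre (qmul (z i) (qconj (z i))) = qnorm2 (z i)) by (intros; qunf; ring).
  assert (G: forall i, (i < n)%nat -> 0 <= qre (qmul (z i) (qconj (z i)))) by (intros; rewrite E; apply qnorm2_ge0).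
  pose proof (qsum_re_ge0 n _ G). split. qunf. lra.
  intros H0 i Hi. assert (i < n \/ i = n)%nat as [|] by lia.
  - apply qnorm2_eq0. rewrite <- E. apply (qsum_re_eq0 n _ G); auto. qunf. lra.
  - subst; auto. Qed.

Lemma cancel_inv p q : q <> qzero -> qadd (qmul qone p) (qmul (qopp (qmul p (qinv q))) q) = qzero.
Proof. intro H. replace (qmul (qopp (qmul p (qinv q))) q) with (qopp (qmul p (qmul (qinv q) q))) by qring.
  rewrite qmul_inv_l by auto. qring. Qed.

Lemma sub_eq0 p r : qadd p (qopp r) = qzero -> p = r.
Proof. intro H. apply quat_eq; apply (f_equal qre) in H as H1; apply (f_equal qi) in H as H2;
  apply (f_equal qj) in H as H3; apply (f_equal qk) in H as H4; qunf; lra. Qed.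

Lemma negvec_last n e : negvec n e -> e n <> qzero.
Proof. intros He E. destruct (herm_pos n e E). unfold negvec in He. lra. Qed.

Lemma neg_perp n e c : negvec n e -> herm n c e = qzero ->
  0 <= qre (herm n c c) /\ (qre (herm n c c) = 0 -> forall i, (i <= n)%nat -> c i = qzero).
Proof.
  intros He Hce. pose proof (negvec_last n e He) as Hen.
  set (mu := qmul (c n) (qinv (e n))).
  set (u := lincomb qone c (qopp mu) e).
  assert (Hun : u n = qzero).
  { unfold u, lincomb, mu. apply cancel_inv; auto. }
  assert (Hec : herm n e c = qzero) by (rewrite herm_conj, Hce; qring).
  assert (Huu : qre (herm n u u) = qre (herm n c c) + qnorm2 mu * qre (herm n e e)).
  { unfold u. rewrite herm_lin_l, !herm_lin_r, Hce, Hec.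
    destruct (herm_self_real n e) as (E1 & E2 & E3).
    revert E1 E2 E3. generalize (herm n e e) (herm n c c). intros. qunf. rewrite E1, E2, E3. ring. }
  destruct (herm_pos n u Hun) as [P1 P2]. unfold negvec in He.
  pose proof (qnorm2_ge0 mu).
  split. nra.
  intros H0 i Hi. assert (qnorm2 mu = 0) by nra.
  apply qnorm2_eq0 in H1.
  assert (Huc : forall j, u j = c j) by (intro j; unfold u, lincomb; rewrite H1; qring).
  rewrite <- Huc. apply P2; auto. nra. Qed.

Lemma nullvec_last n x : nullvec n x -> x n <> qzero.
Proof. intros [[i [Hi Hx]] H0] E. destruct (herm_pos n x E) as [_ P]. apply Hx, P; auto. rewrite H0; reflexivity. Qed.

Lemma null_orth n x y : nullvec n x -> nullvec n y -> herm n x y = qzero -> same_line n x y.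
Proof.
  intros Hx Hy Hxy. pose proof (nullvec_last n x Hx) as Hxn. pose proof (nullvec_last n y Hy) as Hyn.
  set (a := qinv (x n)). set (b := qinv (y n)).
  set (d := lincomb a x (qopp b) y).
  assert (Hdn : d n = qzero).
  { unfold d, lincomb, a, b. rewrite qmul_inv_l by auto.
    replace (qmul (qopp (qinv (y n))) (y n)) with (qopp (qmul (qinv (y n)) (y n))) by qring.
    rewrite qmul_inv_l by auto. qring. }
  assert (Hyx : herm n y x = qzero) by (rewrite herm_conj, Hxy; qring).
  assert (Hdd : herm n d d = qzero).
  { unfold d. rewrite herm_lin_l, !herm_lin_r, Hxy, Hyx. destruct Hx as [_ ->]. destruct Hy as [_ ->]. qring. }
  destruct (herm_pos n d Hdn) as [_ P].
  assert (Hd0 : forall i, (i <= n)%nat -> d i = qzero) by (apply P; rewrite Hdd; reflexivity).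
  exists (qmul (y n) a). split.
  - apply qmul_nz; auto. unfold a. intro E. pose proof (qmul_inv_l (x n) Hxn). rewrite E in H. qunf. inversion H. lra.
  - intros i Hi. specialize (Hd0 i Hi). unfold d, lincomb in Hd0.
    replace (qmul (qopp b) (y i)) with (qopp (qmul b (y i))) in Hd0 by qring.
    apply sub_eq0 in Hd0. rewrite <- qmul_assoc, Hd0, qmul_assoc. unfold b.
    rewrite qmul_inv_r by auto. qring.
Qed.

Definition hd (r : R) : R := 2 * qacosh (sqrt r).

Lemma hdist_hd n z w : hdist n z w =
  hd (qnorm2 (herm n z w) / (qre (herm n z z) * qre (herm n w w))).
Proof. reflexivity. Qed.

Lemma sqrt_ge1 r : 1 <= r -> 1 <= sqrt r.
Proof. intro H. rewrite <- sqrt_1. apply sqrt_le_1; lra. Qed.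

Lemma qacosh_lt s1 s2 : 1 <= s1 -> s1 < s2 -> qacosh s1 < qacosh s2.
Proof. intros H1 H2. unfold qacosh. apply ln_increasing.
  pose proof (sqrt_pos (s1 * s1 - 1)); lra.
  assert (sqrt (s1 * s1 - 1) <= sqrt (s2 * s2 - 1)) by (apply sqrt_le_1_alt; nra). lra. Qed.

Lemma hd_lt r1 r2 : 1 <= r1 -> r1 < r2 -> hd r1 < hd r2.
Proof. intros H1 H2. unfold hd. apply Rmult_lt_compat_l. lra. apply qacosh_lt.
  apply sqrt_ge1; auto. apply sqrt_lt_1; lra. Qed.

Lemma hd_le r1 r2 : 1 <= r1 -> r1 <= r2 -> hd r1 <= hd r2.
Proof. intros H1 [H2|H2]. left; apply hd_lt; auto. subst; lra. Qed.

Lemma sinh_hd r : 1 <= r -> sinh (hd r) = 2 * sqrt r * sqrt (r - 1).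
Proof.
  intro H. unfold hd, qacosh, sinh.
  set (s := sqrt r). assert (Hs : s * s = r) by (apply sqrt_sqrt; lra).
  assert (Hs1 : 1 <= s) by (apply sqrt_ge1; auto).
  replace (s * s - 1) with (r - 1) by lra.
  set (t := sqrt (r - 1)). assert (Ht : t * t = r - 1) by (apply sqrt_sqrt; lra).
  assert (Ht0 : 0 <= t) by apply sqrt_pos.
  assert (Hu : 0 < s + t) by lra.
  replace (2 * ln (s + t)) with (ln (s + t) + ln (s + t)) by ring.
  rewrite exp_Ropp, exp_plus, exp_ln by auto.
  assert (Hinv : / ((s + t) * (s + t)) = (s - t) * (s - t)).
  { field_simplify_eq; [|lra]. nra. }
  rewrite Hinv. nra. Qed.

Definition rho (A B : quat) : R := qre (qmul A (qconj B)).
Definition Fq (A B : quat) : R := sqrt (qnorm2 A * qnorm2 B - rho A B ^ 2) / Rabs (rho A B).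
Definition lc (x1 x2 : qvec) (A B : quat) := lincomb A x1 B x2.

Lemma Fq_opp A B : Fq (qopp A) (qopp B) = Fq A B.
Proof. unfold Fq, rho. f_equal. f_equal. f_equal. f_equal; qunf; ring. qunf; f_equal; ring. qunf; f_equal; ring. Qed.

Lemma rho_sq_le A B : rho A B ^ 2 <= qnorm2 A * qnorm2 B.
Proof. unfold rho. rewrite <- qnorm2_conj with (a := B), <- qnorm2_mul.
  generalize (qmul A (qconj B)); intro w. qunf. nra. Qed.

Lemma rho_nzl A B : rho A B <> 0 -> A <> qzero.
Proof. intros H E; apply H; subst; unfold rho; qunf; ring. Qed.
Lemma rho_nzr A B : rho A B <> 0 -> B <> qzero.
Proof. intros H E; apply H; subst; unfold rho; qunf; ring. Qed.

Lemma herm_lc_l n x1 x2 A B w : herm n (lc x1 x2 A B) w = qadd (qmul A (herm n x1 w)) (qmul B (herm n x2 w)).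
Proof. apply herm_lin_l. Qed.
Lemma herm_lc_r n x1 x2 A B w : herm n w (lc x1 x2 A B) = qadd (qmul (herm n w x1) (qconj A)) (qmul (herm n w x2) (qconj B)).
Proof. apply herm_lin_r. Qed.

Lemma herm_lc_x1 n x1 x2 A B : herm n x1 x1 = qzero -> herm n x1 x2 = qm1 ->
  herm n (lc x1 x2 A B) x1 = qopp B.
Proof. intros H11 H12. rewrite herm_lc_l, H11, (herm_conj n x1 x2), H12. qring. Qed.
Lemma herm_lc_x2 n x1 x2 A B : herm n x2 x2 = qzero -> herm n x1 x2 = qm1 ->
  herm n (lc x1 x2 A B) x2 = qopp A.
Proof. intros H22 H12. rewrite herm_lc_l, H22, H12. qring. Qed.
Lemma herm_lc_lc n x1 x2 A B C D : herm n x1 x1 = qzero -> herm n x2 x2 = qzero -> herm n x1 x2 = qm1 ->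
  herm n (lc x1 x2 A B) (lc x1 x2 C D) = qopp (qadd (qmul A (qconj D)) (qmul B (qconj C))).
Proof. intros H11 H22 H12. rewrite herm_lc_r, herm_lc_x1, herm_lc_x2 by auto. qring. Qed.
Lemma herm_lc_self n x1 x2 A B : herm n x1 x1 = qzero -> herm n x2 x2 = qzero -> herm n x1 x2 = qm1 ->
  qre (herm n (lc x1 x2 A B) (lc x1 x2 A B)) = -2 * rho A B.
Proof. intros. rewrite herm_lc_lc by auto. unfold rho. qunf. ring. Qed.

Lemma in_Sigma_dec n x1 x2 z : in_Sigma n x1 x2 z ->
  exists A B, forall i, (i <= n)%nat -> z i = lc x1 x2 A B i.
Proof. intros [_ [a [b [l [Hl H]]]]]. exists (qmul l a), (qmul l b). intros i Hi.
  rewrite H by auto. unfold lc, lincomb. qring. Qed.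

Lemma sandwich_real l w : qi w = 0 -> qj w = 0 -> qk w = 0 ->
  qmul (qmul l w) (qconj l) = qscal (qnorm2 l * qre w).
Proof. intros. apply quat_eq; qunf; rewrite ?H, ?H0, ?H1; ring. Qed.

Lemma swap_real s t tau : s <> qzero -> qmul s (qconj t) = qscal tau -> qmul (qconj t) s = qscal tau.
Proof. intros Hs H.
  assert (qconj t = qmul (qinv s) (qscal tau)).
  { rewrite <- H, qmul_assoc, qmul_inv_l, qmul_1l; auto. }
  rewrite H0. replace (qmul (qmul (qinv s) (qscal tau)) s) with (qmul (qscal tau) (qmul (qinv s) s)) by qring.
  rewrite qmul_inv_l by auto. qring. Qed.

Lemma norm_sum_id A B s t : qnorm2 (qadd (qmul A (qconj t)) (qmul B (qconj s))) =
  qnorm2 A * qnorm2 t + qnorm2 B * qnorm2 s + 2 * qre (qmul (qmul A (qmul (qconj t) s)) (qconj B)).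
Proof. qunf. ring. Qed.

Lemma sq_inj a b : 0 <= a -> 0 <= b -> a * a = b * b -> a = b.
Proof. intros. nra. Qed.

Lemma herm_ext2 n z z' w w' : (forall i, (i <= n)%nat -> z i = z' i) -> (forall i, (i <= n)%nat -> w i = w' i) ->
  herm n z w = herm n z' w'.
Proof. intros; rewrite (herm_ext_l n z z'), (herm_ext_r n z' w w'); auto. Qed.

Lemma qnorm2_opp a : qnorm2 (qopp a) = qnorm2 a.
Proof. qunf; ring. Qed.

Lemma dist_formula n x1 x2 A B z :
  herm n x1 x1 = qzero -> herm n x2 x2 = qzero -> herm n x1 x2 = qm1 ->
  negvec n z -> (forall i, (i <= n)%nat -> z i = lc x1 x2 A B i) ->
  sinh (dist_to_sigma n x1 x2 z) = Fq A B.
Proof.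
  intros H11 H22 H12 Hz Hzd.
  assert (Hzz : qre (herm n z z) = -2 * rho A B).
  { rewrite (herm_ext2 n z (lc x1 x2 A B) z (lc x1 x2 A B)) by auto. apply herm_lc_self; auto. }
  assert (Hrho : 0 < rho A B) by (unfold negvec in Hz; lra).
  set (rh := rho A B) in *.
  assert (HA : 0 < qnorm2 A) by (apply qnorm2_pos; apply (rho_nzl A B); apply Rgt_not_eq; exact Hrho).
  assert (HB : 0 < qnorm2 B) by (apply qnorm2_pos; apply (rho_nzr A B); apply Rgt_not_eq; exact Hrho).
  set (NA := qnorm2 A) in *. set (NB := qnorm2 B) in *.
  set (k := sqrt (NB / NA)).
  assert (Hk : 0 < k) by (apply sqrt_lt_R0; apply Rdiv_lt_0_compat; auto).
  assert (Hkk : k * k = NB / NA) by (apply sqrt_sqrt; left; apply Rdiv_lt_0_compat; auto).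
  assert (HNB : NB = k * k * NA) by (rewrite Hkk; field; lra).
  set (m := k * NA).
  assert (Hmm : m * m = NA * NB) by (unfold m; rewrite HNB; ring).
  assert (Hm : 0 < m) by (unfold m; nra).
  assert (Hrm : rh <= m) by (pose proof (rho_sq_le A B); fold rh NA NB in H; nra).
  set (R0 := (m + rh) / (2 * rh)).
  assert (HR0 : 1 <= R0) by (unfold R0; apply Rcomplements.Rle_div_r; lra).
  assert (Hlow : forall q, in_sigma n x1 x2 q -> hd R0 <= hdist n z q).
  { intros q [Hq [a [b [[l [Hl Hql]] [Hreal Hneg]]]]].
    set (s := qmul l a). set (t := qmul l b).
    assert (Hqst : forall i, (i <= n)%nat -> q i = lc x1 x2 s t i).
    { intros i Hi; rewrite Hql by auto; unfold lc, lincomb, s, t; qring. }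
    set (w := qmul a (qconj b)).
    assert (Ew : qmul (qmul a (herm n x1 x2)) (qconj b) = qopp w) by (rewrite H12; unfold w; qring).
    rewrite Ew in Hreal, Hneg. destruct Hreal as (Hi & Hj & Hk'). unfold qopp in *; cbn [qre qi qj qk] in *.
    assert (Hst : qmul s (qconj t) = qscal (qnorm2 l * qre w)).
    { replace (qmul s (qconj t)) with (qmul (qmul l w) (qconj l)) by (unfold s, t, w; qring).
      apply sandwich_real; lra. }
    set (tau := qnorm2 l * qre w) in *.
    assert (Htau : 0 < tau) by (unfold tau; pose proof (qnorm2_pos l Hl); nra).
    assert (Hs0 : s <> qzero).
    { intro E. rewrite E, qmul_0l in Hst. apply (f_equal qre) in Hst. qunf. lra. }
    assert (Hts := swap_real s t tau Hs0 Hst).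
    assert (Hnts : qnorm2 t * qnorm2 s = tau * tau).
    { rewrite <- (qnorm2_conj t), Rmult_comm, <- qnorm2_mul, Hst. qunf; ring. }
    assert (Hzq : herm n z q = qopp (qadd (qmul A (qconj t)) (qmul B (qconj s)))).
    { rewrite (herm_ext2 n z (lc x1 x2 A B) q (lc x1 x2 s t)) by auto. rewrite herm_lc_lc by auto. qring. }
    assert (Hqq : qre (herm n q q) = -2 * tau).
    { rewrite (herm_ext2 n q (lc x1 x2 s t) q (lc x1 x2 s t)) by auto. rewrite herm_lc_self by auto.
      unfold rho. rewrite Hst. reflexivity. }
    rewrite hdist_hd, Hzq, qnorm2_opp, norm_sum_id, Hts, Hzz, Hqq.
    assert (Hre : qre (qmul (qmul A (qscal tau)) (qconj B)) = tau * rh) by (unfold rh, rho; qunf; ring).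
    rewrite Hre. fold NA NB.
    set (X := NA * qnorm2 t). set (Y := NB * qnorm2 s).
    assert (HXY : X * Y = (m * tau) * (m * tau)) by (unfold X, Y; replace (NA * qnorm2 t * (NB * qnorm2 s)) with ((NA * NB) * (qnorm2 t * qnorm2 s)) by ring; rewrite <- Hmm, Hnts; ring).
    assert (HX : 0 <= X) by (unfold X; pose proof (qnorm2_ge0 t); nra).
    assert (HY : 0 <= Y) by (unfold Y; pose proof (qnorm2_ge0 s); nra).
    assert (HXY2 : 2 * (m * tau) <= X + Y).
    { destruct (Rle_lt_dec (2 * (m * tau)) (X + Y)) as [|Hc]; auto. exfalso.
      assert ((X + Y) * (X + Y) < (2 * (m * tau)) * (2 * (m * tau))) by (apply Rmult_le_0_lt_compat; lra).
      assert (0 <= (X - Y) * (X - Y)) by (pose proof (Rle_0_sqr (X - Y)); unfold Rsqr in *; lra).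
      assert (E2 : (X + Y) * (X + Y) = (X - Y) * (X - Y) + 4 * (X * Y)) by ring.
      rewrite HXY in E2. lra. }
    apply hd_le; auto.
    unfold R0. apply Rminus_le.
    replace ((m + rh) / (2 * rh) - (X + Y + 2 * (tau * rh)) / (-2 * rh * (-2 * tau)))
      with (- ((X + Y - 2 * (m * tau)) / (4 * rh * tau))) by (field; lra).
    assert (0 <= (X + Y - 2 * (m * tau)) / (4 * rh * tau)).
    { apply Rmult_le_pos. lra. left; apply Rinv_0_lt_compat; nra. }
    lra. }
  set (qs := lc x1 x2 qone (qscal k)).
  assert (Hqs : in_sigma n x1 x2 qs).
  { split.
    - unfold negvec, qs. rewrite herm_lc_self by auto. unfold rho; qunf; nra.
    - exists qone, (qscal k). split; [|split].
      + exists qone. split. intro E; apply (f_equal qre) in E; qunf; lra.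
        intros; unfold qs, lc; rewrite qmul_1l; auto.
      + rewrite H12; unfold qreal; qunf; repeat split; ring.
      + rewrite H12; qunf; lra. }
  assert (Hval : hdist n z qs = hd R0).
  { rewrite hdist_hd. f_equal.
    rewrite (herm_ext2 n z (lc x1 x2 A B) qs qs) by auto.
    unfold qs. rewrite herm_lc_lc, herm_lc_self, Hzz by auto.

    replace (qnorm2 (qopp (qadd (qmul A (qconj (qscal k))) (qmul B (qconj qone)))))
      with (k * k * NA + 2 * k * rh + NB) by (unfold NA, NB, rh, rho; qunf; ring).
    replace (rho qone (qscal k)) with k by (unfold rho; qunf; ring).
    fold rh. unfold R0, m. rewrite HNB. field. lra. }
  assert (Hglb : dist_to_sigma n x1 x2 z = hd R0).
  { unfold dist_to_sigma.
    rewrite (is_glb_Rbar_unique _ (Finite (hd R0))). reflexivity.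
    split.
    - intros r [q [Hq ->]]. simpl. apply Hlow; auto.
    - intros b Hb. apply (Hb (hd R0)). exists qs. split; auto. }
  rewrite Hglb, sinh_hd by auto.
  unfold Fq. fold rh. fold NA NB. rewrite Rabs_pos_eq by lra.
  apply sq_inj.
  - pose proof (sqrt_pos R0); pose proof (sqrt_pos (R0 - 1)); nra.
  - apply Rmult_le_pos. apply sqrt_pos. left; apply Rinv_0_lt_compat; lra.
  - assert (Hsq1 : sqrt R0 * sqrt R0 = R0) by (apply sqrt_sqrt; lra).
    assert (Hsq2 : sqrt (R0 - 1) * sqrt (R0 - 1) = R0 - 1) by (apply sqrt_sqrt; lra).
    assert (Hsq3 : sqrt (NA * NB - rh ^ 2) * sqrt (NA * NB - rh ^ 2) = NA * NB - rh ^ 2)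
      by (apply sqrt_sqrt; nra).
    replace (2 * sqrt R0 * sqrt (R0 - 1) * (2 * sqrt R0 * sqrt (R0 - 1)))
      with (4 * (sqrt R0 * sqrt R0) * (sqrt (R0 - 1) * sqrt (R0 - 1))) by ring.
    replace (sqrt (NA * NB - rh ^ 2) / rh * (sqrt (NA * NB - rh ^ 2) / rh))
      with (sqrt (NA * NB - rh ^ 2) * sqrt (NA * NB - rh ^ 2) / (rh * rh)) by (field; lra).
    rewrite Hsq1, Hsq2, Hsq3, <- Hmm. unfold R0. field. lra.
Qed.

Lemma herm_real_scal n z : herm n z z = qscal (qre (herm n z z)).
Proof. destruct (herm_self_real n z) as (H1 & H2 & H3). apply quat_eq; qunf; auto. Qed.

Lemma proj_lemma n x1 x2 y p :
  herm n x1 x1 = qzero -> herm n x2 x2 = qzero -> herm n x1 x2 = qm1 ->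
  negvec n y -> nearest_in_Sigma n x1 x2 y p ->
  0 < rho (herm n y x2) (herm n y x1) /\
  exists mu, mu <> qzero /\ herm n p x1 = qmul mu (herm n y x1) /\ herm n p x2 = qmul mu (herm n y x2).
Proof.
  intros H11 H22 H12 Hy [Hp Hmin].
  assert (H21 : herm n x2 x1 = qm1) by (rewrite herm_conj, H12; qring).
  set (al := qopp (herm n y x2)). set (be := qopp (herm n y x1)).
  set (pi := lc x1 x2 al be).
  assert (Hpi1 : herm n pi x1 = herm n y x1) by (unfold pi; rewrite herm_lc_x1 by auto; unfold be; qring).
  assert (Hpi2 : herm n pi x2 = herm n y x2) by (unfold pi; rewrite herm_lc_x2 by auto; unfold al; qring).
  set (c := lincomb qone y qm1 pi).
  assert (Hc1 : herm n c x1 = qzero) by (unfold c; rewrite herm_lin_l, Hpi1; qring).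
  assert (Hc2 : herm n c x2 = qzero) by (unfold c; rewrite herm_lin_l, Hpi2; qring).
  assert (Hcl : forall a b, herm n c (lc x1 x2 a b) = qzero) by (intros; rewrite herm_lc_r, Hc1, Hc2; qring).
  set (e := lc x1 x2 qone qone).
  assert (He : negvec n e) by (unfold negvec, e; rewrite herm_lc_self by auto; unfold rho; qunf; lra).
  destruct (neg_perp n e c He (Hcl qone qone)) as [HC _].
  assert (Hcpi : herm n c pi = qzero) by apply Hcl.
  assert (Hpic : herm n pi c = qzero) by (rewrite herm_conj, Hcpi; qring).
  assert (Hyd : forall i, y i = lincomb qone pi qone c i) by (intro i; unfold c, lincomb; qring).
  assert (Hyy : qre (herm n y y) = qre (herm n pi pi) + qre (herm n c c)).
  { rewrite (herm_ext2 n y (lincomb qone pi qone c) y (lincomb qone pi qone c)) by auto.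
    rewrite herm_lin_l, !herm_lin_r, Hcpi, Hpic. qunf; ring. }
  set (Y := qre (herm n y y)) in *. set (P := qre (herm n pi pi)) in *. set (C := qre (herm n c c)) in *.
  assert (HY : Y < 0) by exact Hy.
  assert (HP : P < 0) by lra.
  assert (HPrho : P = -2 * rho al be) by (unfold P, pi; apply herm_lc_self; auto).
  split.
  { replace (rho (herm n y x2) (herm n y x1)) with (rho al be) by (unfold rho, al, be; qunf; ring). lra. }
  assert (Hpin : in_Sigma n x1 x2 pi).
  { split. exact HP. exists al, be, qone. split. intro E; apply (f_equal qre) in E; qunf; lra.
    intros; rewrite qmul_1l; reflexivity. }
  specialize (Hmin pi Hpin).
  destruct (in_Sigma_dec n x1 x2 p Hp) as [a [b Hpd]].
  assert (Hcp : herm n c p = qzero) by (rewrite (herm_ext_r n c p (lc x1 x2 a b)) by auto; apply Hcl).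
  assert (Hyp : herm n y p = herm n pi p).
  { rewrite (herm_ext_l n y (lincomb qone pi qone c)) by auto. rewrite herm_lin_l, Hcp. qring. }
  assert (Hypi : herm n y pi = qscal P).
  { rewrite (herm_ext_l n y (lincomb qone pi qone c)) by auto. rewrite herm_lin_l, Hcpi, herm_real_scal. apply quat_eq; qunf; unfold P; ring. }
  set (mu := qmul (herm n p pi) (qscal (/ P))).
  assert (Hppi : herm n p pi = qmul mu (qscal P)).
  { unfold mu. rewrite <- qmul_assoc. replace (qmul (qscal (/ P)) (qscal P)) with qone.
    rewrite qmul_1r; auto. apply quat_eq; qunf; field; lra. }
  set (r := lincomb qone p (qopp mu) pi).
  assert (Hrpi : herm n r pi = qzero).
  { unfold r. rewrite herm_lin_l, Hppi, herm_real_scal. fold P. qring. }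
  destruct (neg_perp n pi r HP Hrpi) as [HR HR0].
  assert (Hpirr : herm n pi r = qzero) by (rewrite herm_conj, Hrpi; qring).
  assert (Hpd2 : forall i, p i = lincomb qone r mu pi i) by (intro i; unfold r, lincomb; qring).
  assert (Hpp : qre (herm n p p) = qre (herm n r r) + qnorm2 mu * P).
  { rewrite (herm_ext2 n p (lincomb qone r mu pi) p (lincomb qone r mu pi)) by auto.
    rewrite herm_lin_l, !herm_lin_r, Hrpi, Hpirr.
    replace (qnorm2 mu * P) with (qre (qmul (qmul mu (herm n pi pi)) (qconj mu))) by (rewrite qre_sandwich; reflexivity). qunf. ring. }
  set (Rr := qre (herm n r r)) in *. set (Q := qre (herm n p p)) in *.
  assert (HQ : Q < 0) by (destruct Hp; exact H).
  assert (HNyp : qnorm2 (herm n y p) = qnorm2 mu * (P * P)).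
  { rewrite Hyp, herm_conj, qnorm2_conj, Hppi, qnorm2_mul. unfold qnorm2 at 2, qscal; cbn. ring. }
  assert (HNypi : qnorm2 (herm n y pi) = P * P) by (rewrite Hypi; unfold qnorm2, qscal; cbn; ring).
  rewrite !hdist_hd, HNyp, HNypi in Hmin. fold Y Q P in Hmin.
  set (Rp := qnorm2 mu * (P * P) / (Y * Q)) in *. set (Rpi := P * P / (Y * P)) in *.
  assert (HRpi : 1 <= Rpi).
  { unfold Rpi. replace (P * P / (Y * P)) with (P / Y) by (field; lra).
    replace (P / Y) with ((- P) / (- Y)) by (field; lra). apply Rcomplements.Rle_div_r; lra. }
  assert (HRle : Rp <= Rpi).
  { destruct (Rle_lt_dec Rp Rpi) as [|Hc]; auto. exfalso. pose proof (hd_lt Rpi Rp HRpi Hc). lra. }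
  assert (Hdiff : Rp - Rpi = - P * Rr * / (Y * Q)).
  { unfold Rp, Rpi. rewrite Hpp. field. repeat split; lra. }
  assert (HRr : Rr = 0).
  { destruct HR as [HR|HR]; auto. exfalso.
    assert (0 < / (Y * Q)) by (apply Rinv_0_lt_compat; replace (Y * Q) with ((- Y) * (- Q)) by ring; apply Rmult_lt_0_compat; lra).
    assert (0 < - P * Rr) by (apply Rmult_lt_0_compat; lra).
    assert (0 < - P * Rr * / (Y * Q)) by (apply Rmult_lt_0_compat; auto). lra. }
  specialize (HR0 HRr).
  assert (Hpmu : forall i, (i <= n)%nat -> p i = qmul mu (pi i)).
  { intros i Hi. rewrite Hpd2. unfold lincomb. rewrite HR0 by auto. qring. }
  exists mu. split; [|split].
  - intro E. assert (qnorm2 mu = 0) by (rewrite E; unfold qnorm2, qzero; cbn [qre qi qj qk]; ring). rewrite H in Hpp. lra.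
  - rewrite (herm_ext_l n p (fun i => qmul mu (pi i))) by auto. rewrite herm_scale_l, Hpi1. reflexivity.
  - rewrite (herm_ext_l n p (fun i => qmul mu (pi i))) by auto. rewrite herm_scale_l, Hpi2. reflexivity.
Qed.

Definition qconv (u : nat -> quat) (a : quat) : Prop :=
  is_lim_seq (fun k => qre (u k)) (qre a) /\ is_lim_seq (fun k => qi (u k)) (qi a) /\
  is_lim_seq (fun k => qj (u k)) (qj a) /\ is_lim_seq (fun k => qk (u k)) (qk a).

Ltac limpoly := repeat (match goal with
 | |- is_lim_seq (fun _ => _ - _) _ => apply is_lim_seq_minus'
 | |- is_lim_seq (fun _ => _ + _) _ => apply is_lim_seq_plus'
 | |- is_lim_seq (fun _ => _ * _) _ => apply is_lim_seq_mult'
 | |- _ => assumption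
 | |- _ => apply is_lim_seq_const end).

Lemma lim_opp' (u : nat -> R) (l : R) : is_lim_seq u l -> is_lim_seq (fun k => - u k) (- l).
Proof. intro H. apply (is_lim_seq_opp u l) in H. exact H. Qed.

Lemma qconv_mul u v a b : qconv u a -> qconv v b -> qconv (fun k => qmul (u k) (v k)) (qmul a b).
Proof. intros (H1 & H2 & H3 & H4) (G1 & G2 & G3 & G4). unfold qconv, qmul; cbn [qre qi qj qk].
  repeat split; limpoly. Qed.
Lemma qconv_add u v a b : qconv u a -> qconv v b -> qconv (fun k => qadd (u k) (v k)) (qadd a b).
Proof. intros (H1 & H2 & H3 & H4) (G1 & G2 & G3 & G4). unfold qconv, qadd; cbn [qre qi qj qk].
  repeat split; limpoly. Qed.
Lemma qconv_sub u v a b : qconv u a -> qconv v b -> qconv (fun k => qsub (u k) (v k)) (qsub a b).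
Proof. intros (H1 & H2 & H3 & H4) (G1 & G2 & G3 & G4). unfold qconv, qsub; cbn [qre qi qj qk].
  repeat split; limpoly. Qed.
Lemma qconv_conj u a : qconv u a -> qconv (fun k => qconj (u k)) (qconj a).
Proof. intros (H1 & H2 & H3 & H4). unfold qconv, qconj; cbn [qre qi qj qk].
  repeat split; try apply lim_opp'; auto. Qed.
Lemma qconv_const a : qconv (fun _ => a) a.
Proof. repeat split; apply is_lim_seq_const. Qed.

Lemma qconv_qsum m (f : nat -> nat -> quat) (g : nat -> quat) :
  (forall i, (i < m)%nat -> qconv (fun k => f k i) (g i)) ->
  qconv (fun k => qsum m (f k)) (qsum m g).
Proof. induction m; intros H; simpl. apply qconv_const.
  apply qconv_add. apply IHm; intros; apply H; lia. apply H; lia. Qed.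

Lemma qconv_herm n (u : nat -> qvec) v x : (forall i, (i <= n)%nat -> qconv (fun k => u k i) (v i)) ->
  qconv (fun k => herm n (u k) x) (herm n v x).
Proof. intros H. unfold herm. apply qconv_sub.
  apply (qconv_qsum n (fun k i => qmul (u k i) (qconj (x i)))). intros; apply qconv_mul. apply H; lia. apply qconv_const.
  apply qconv_mul. apply H; lia. apply qconv_const. Qed.

Lemma lim_rho u v a b : qconv u a -> qconv v b -> is_lim_seq (fun k => rho (u k) (v k)) (rho a b).
Proof. intros Hu Hv. destruct (qconv_mul u (fun k => qconj (v k)) a (qconj b) Hu (qconv_conj v b Hv)); auto. Qed.
Lemma lim_norm u a : qconv u a -> is_lim_seq (fun k => qnorm2 (u k)) (qnorm2 a).
Proof. intros (H1 & H2 & H3 & H4). unfold qnorm2. limpoly. Qed.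

Lemma lim_Fq_fin u v a b : qconv u a -> qconv v b -> rho a b <> 0 ->
  is_lim_seq (fun k => Fq (u k) (v k)) (Fq a b).
Proof. intros Hu Hv Hr. unfold Fq. apply is_lim_seq_div'.
  - apply (is_lim_seq_continuous sqrt (fun k => qnorm2 (u k) * qnorm2 (v k) - rho (u k) (v k) ^ 2)).
    apply continuity_pt_sqrt. pose proof (rho_sq_le a b); lra.
    apply is_lim_seq_minus'. apply is_lim_seq_mult'; apply lim_norm; auto.
    simpl. apply is_lim_seq_mult'. apply lim_rho; auto. apply is_lim_seq_mult'. apply lim_rho; auto. apply is_lim_seq_const.
  - apply (is_lim_seq_abs _ (rho a b)). apply lim_rho; auto.
  - intro E. apply Hr. destruct (Rcase_abs (rho a b)); [rewrite Rabs_left in E|rewrite Rabs_right in E]; lra.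
Qed.

Lemma lim_Fq_inf u v a b : qconv u a -> qconv v b -> rho a b = 0 -> a <> qzero -> b <> qzero ->
  (forall k, 0 < rho (u k) (v k)) ->
  is_lim_seq (fun k => Fq (u k) (v k)) p_infty.
Proof. intros Hu Hv Hr Ha Hb Hpos.
  set (c := sqrt (qnorm2 a * qnorm2 b)).
  assert (Hc : 0 < c) by (apply sqrt_lt_R0; pose proof (qnorm2_pos a Ha); pose proof (qnorm2_pos b Hb); nra).
  assert (Hnum : is_lim_seq (fun k => sqrt (qnorm2 (u k) * qnorm2 (v k) - rho (u k) (v k) ^ 2)) c).
  { unfold c. replace (qnorm2 a * qnorm2 b) with (qnorm2 a * qnorm2 b - rho a b ^ 2) by (rewrite Hr; ring).
    apply (is_lim_seq_continuous sqrt (fun k => qnorm2 (u k) * qnorm2 (v k) - rho (u k) (v k) ^ 2)).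
    apply continuity_pt_sqrt. pose proof (rho_sq_le a b); lra.
    apply is_lim_seq_minus'. apply is_lim_seq_mult'; apply lim_norm; auto.
    simpl. apply is_lim_seq_mult'. apply lim_rho; auto. apply is_lim_seq_mult'. apply lim_rho; auto. apply is_lim_seq_const. }
  assert (Hden : is_lim_seq (fun k => rho (u k) (v k)) 0) by (rewrite <- Hr; apply lim_rho; auto).
  apply is_lim_seq_spec in Hnum. apply is_lim_seq_spec in Hden. apply is_lim_seq_spec.
  intros M. set (M' := Rmax M 1).
  assert (HM' : 0 < M') by (unfold M'; pose proof (Rmax_r M 1); lra).
  destruct (Hnum (mkposreal (c / 2) ltac:(lra))) as [N1 HN1].
  destruct (Hden (mkposreal (c / (2 * M')) ltac:(apply Rdiv_lt_0_compat; lra))) as [N2 HN2].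
  exists (N1 + N2)%nat. intros k Hk.
  specialize (HN1 k ltac:(lia)). specialize (HN2 k ltac:(lia)). simpl in HN1, HN2.
  pose proof (Hpos k). unfold Fq. rewrite Rabs_pos_eq by lra.
  rewrite Rminus_0_r, Rabs_pos_eq in HN2 by lra.
  set (r := rho (u k) (v k)) in *. replace (r ^ 2) with (r * (r * 1)) by ring. set (s := sqrt (qnorm2 (u k) * qnorm2 (v k) - r * (r * 1))) in *.
  assert (Hs : c / 2 < s) by (apply Rabs_def2 in HN1; lra).
  assert (M' * r < c / 2).
  { apply (Rmult_lt_compat_l M') in HN2; auto. replace (M' * (c / (2 * M'))) with (c / 2) in HN2 by (field; lra). exact HN2. }
  assert (M' < s / r).
  { apply Rcomplements.Rlt_div_r; auto. lra. }
  pose proof (Rmax_l M 1). fold M' in H2. lra.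
Qed.

Lemma Fq_scale l A B : l <> qzero -> Fq (qmul l A) (qmul l B) = Fq A B.
Proof. intro Hl. pose proof (qnorm2_pos l Hl). unfold Fq.
  assert (E : rho (qmul l A) (qmul l B) = qnorm2 l * rho A B) by (unfold rho; qunf; ring).
  rewrite E, !qnorm2_mul, Rabs_mult, (Rabs_pos_eq (qnorm2 l)) by lra.
  replace (qnorm2 l * qnorm2 A * (qnorm2 l * qnorm2 B) - (qnorm2 l * rho A B) ^ 2)
    with ((qnorm2 l * qnorm2 l) * (qnorm2 A * qnorm2 B - rho A B ^ 2)) by ring.
  destruct (Req_dec (rho A B) 0) as [E0|E0].
  - rewrite E0, Rabs_R0, Rmult_0_r. unfold Rdiv. rewrite Rinv_0, !Rmult_0_r. reflexivity.
  - rewrite sqrt_mult_alt by nra. rewrite sqrt_square by lra. field. split. apply Rabs_no_R0; auto. lra.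
Qed.

Lemma rho_scale l A B : rho (qmul l A) (qmul l B) = qnorm2 l * rho A B.
Proof. unfold rho; qunf; ring. Qed.

Lemma angle_tan A B : A <> qzero -> B <> qzero ->
  let x := Rabs (rho A B) / sqrt (qnorm2 A * qnorm2 B) in
  (rho A B = 0 -> acos x = PI / 2) /\
  (rho A B <> 0 -> acos x <> PI / 2 /\ Rabs (tan (acos x)) = Fq A B).
Proof.
  intros HA HB x. pose proof (qnorm2_pos A HA). pose proof (qnorm2_pos B HB).
  set (S := sqrt (qnorm2 A * qnorm2 B)).
  assert (HS : 0 < S) by (apply sqrt_lt_R0; nra).
  assert (HSS : S * S = qnorm2 A * qnorm2 B) by (apply sqrt_sqrt; nra).
  pose proof (rho_sq_le A B) as Hle.
  assert (Hab : Rabs (rho A B) <= S).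
  { rewrite <- sqrt_Rsqr_abs. apply sqrt_le_1_alt. unfold Rsqr. simpl in Hle. lra. }
  assert (Hx1 : 0 <= x <= 1).
  { unfold x; fold S. split. apply Rmult_le_pos. apply Rabs_pos. left; apply Rinv_0_lt_compat; auto.
    apply Rcomplements.Rle_div_l; lra. }
  split.
  - intro E. unfold x. rewrite E, Rabs_R0. unfold Rdiv; rewrite Rmult_0_l. apply acos_0.
  - intro E. assert (Hr : 0 < Rabs (rho A B)) by (apply Rabs_pos_lt; auto).
    assert (Hx : 0 < x) by (unfold x; apply Rdiv_lt_0_compat; auto).
    split.
    + intro E2. assert (cos (acos x) = cos (PI / 2)) by (rewrite E2; auto).
      rewrite cos_acos, cos_PI2 in H1 by lra. lra.
    + rewrite tan_acos by lra. unfold Fq.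
      assert (H1x : 0 <= 1 - x²) by (unfold Rsqr; nra).
      rewrite Rabs_pos_eq.
      2: { apply Rmult_le_pos. apply sqrt_pos. left; apply Rinv_0_lt_compat; auto. }
      apply sq_inj.
      * apply Rmult_le_pos. apply sqrt_pos. left; apply Rinv_0_lt_compat; auto.
      * apply Rmult_le_pos. apply sqrt_pos. left; apply Rinv_0_lt_compat; auto.
      * assert (E1 : sqrt (1 - x²) * sqrt (1 - x²) = 1 - x²) by (apply sqrt_sqrt; auto).
        assert (E3 : sqrt (qnorm2 A * qnorm2 B - rho A B ^ 2) * sqrt (qnorm2 A * qnorm2 B - rho A B ^ 2)
                 = qnorm2 A * qnorm2 B - rho A B ^ 2) by (apply sqrt_sqrt; lra).
        replace (sqrt (1 - x²) / x * (sqrt (1 - x²) / x)) with ((sqrt (1 - x²) * sqrt (1 - x²)) / (x * x)) by (field; lra).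
        replace (sqrt (qnorm2 A * qnorm2 B - rho A B ^ 2) / Rabs (rho A B) *
                 (sqrt (qnorm2 A * qnorm2 B - rho A B ^ 2) / Rabs (rho A B)))
          with ((sqrt (qnorm2 A * qnorm2 B - rho A B ^ 2) * sqrt (qnorm2 A * qnorm2 B - rho A B ^ 2))
                / (Rabs (rho A B) * Rabs (rho A B))) by (field; lra).
        rewrite E1, E3, <- Rabs_mult, Rabs_pos_eq by nra.
        unfold x, Rsqr; fold S. rewrite <- HSS.
        replace (Rabs (rho A B) / S * (Rabs (rho A B) / S)) with ((Rabs (rho A B) * Rabs (rho A B)) / (S * S)) by (field; lra).
        rewrite <- Rabs_mult, Rabs_pos_eq by nra. field. split. simpl; lra. nra.
Qed.

Lemma core n x1 x2 x3 (y p : nat -> qvec) :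
  herm n x1 x1 = qzero -> herm n x2 x2 = qzero -> herm n x1 x2 = qm1 ->
  herm n x3 x2 <> qzero -> herm n x3 x1 <> qzero ->
  (forall k, negvec n (y k)) -> conv_to n y x3 ->
  (forall k, nearest_in_Sigma n x1 x2 (y k) (p k)) ->
  is_lim_seq (fun k => sinh (dist_to_sigma n x1 x2 (p k))) (abs_tan_angleH n x1 x2 x3).
Proof.
  intros H11 H22 H12 HA HB Hy [u [Hsl Hlim]] Hp.
  set (a := fun k => herm n (u k) x2). set (b := fun k => herm n (u k) x1).
  assert (Hval : forall k, sinh (dist_to_sigma n x1 x2 (p k)) = Fq (a k) (b k) /\ 0 < rho (a k) (b k)).
  { intro k. destruct (proj_lemma n x1 x2 (y k) (p k) H11 H22 H12 (Hy k) (Hp k)) as [Hr [mu [Hmu [E1 E2]]]].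
    destruct (Hsl k) as [nu [Hnu Hu]].
    assert (U1 : b k = qmul nu (herm n (y k) x1)).
    { unfold b. rewrite (herm_ext_l n (u k) (fun i => qmul nu (y k i))) by auto. apply herm_scale_l. }
    assert (U2 : a k = qmul nu (herm n (y k) x2)).
    { unfold a. rewrite (herm_ext_l n (u k) (fun i => qmul nu (y k i))) by auto. apply herm_scale_l. }
    destruct (Hp k) as [Hps _].
    destruct (in_Sigma_dec n x1 x2 (p k) Hps) as [A [B Hd]].
    rewrite (dist_formula n x1 x2 A B (p k)) by (auto; destruct Hps; auto).
    assert (P1 : herm n (p k) x1 = qopp B) by (rewrite (herm_ext_l n (p k) (lc x1 x2 A B)) by auto; apply herm_lc_x1; auto).
    assert (P2 : herm n (p k) x2 = qopp A) by (rewrite (herm_ext_l n (p k) (lc x1 x2 A B)) by auto; apply herm_lc_x2; auto).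
    split.
    - rewrite <- Fq_opp, <- P1, <- P2, E1, E2, Fq_scale, U1, U2, Fq_scale; auto.
    - rewrite U1, U2, rho_scale. pose proof (qnorm2_pos nu Hnu). nra. }
  assert (Ca : qconv a (herm n x3 x2)) by (apply qconv_herm; intros i Hi; destruct (Hlim i Hi) as (L1 & L2 & L3 & L4); repeat split; auto).
  assert (Cb : qconv b (herm n x3 x1)) by (apply qconv_herm; intros i Hi; destruct (Hlim i Hi) as (L1 & L2 & L3 & L4); repeat split; auto).
  apply (is_lim_seq_ext (fun k => Fq (a k) (b k))). intro k; symmetry; apply Hval.
  set (A := herm n x3 x2) in *. set (B := herm n x3 x1) in *.
  assert (Hang : angleH n x1 x2 x3 = acos (Rabs (rho A B) / sqrt (qnorm2 A * qnorm2 B))).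
  { unfold angleH, triple. rewrite H12, (herm_conj n x3 x2). fold A B. f_equal. f_equal.
    - rewrite <- (Rabs_Ropp (rho A B)). f_equal. unfold rho; qunf; ring.
    - f_equal. rewrite !qnorm2_mul, qnorm2_conj. unfold qnorm2 at 1, qm1, qscal; cbn [qre qi qj qk]. ring. }
  destruct (angle_tan A B HA HB) as [T1 T2].
  unfold abs_tan_angleH. rewrite Hang.
  destruct (Req_dec_T _ (PI / 2)) as [E|E].
  - destruct (Req_dec (rho A B) 0) as [R0|R0].
    + apply (lim_Fq_inf a b A B); auto. intro k; apply Hval.
    + exfalso. apply (proj1 (T2 R0)); auto.
  - destruct (Req_dec (rho A B) 0) as [R0|R0].
    + exfalso. apply E, T1; auto.
    + rewrite (proj2 (T2 R0)). apply lim_Fq_fin; auto.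
Qed.

Lemma angleH_scale c T : 0 < c ->
  acos (Rabs (qre (qmul (qscal c) T)) / sqrt (qnorm2 (qmul (qscal c) T))) =
  acos (Rabs (qre T) / sqrt (qnorm2 T)).
Proof. intro Hc. f_equal.
  replace (qre (qmul (qscal c) T)) with (c * qre T) by (qunf; ring).
  replace (qnorm2 (qmul (qscal c) T)) with ((c * c) * qnorm2 T) by (qunf; ring).
  rewrite Rabs_mult, (Rabs_pos_eq c) by lra.
  rewrite sqrt_mult_alt by nra. rewrite sqrt_square by lra.
  destruct (Req_dec (sqrt (qnorm2 T)) 0) as [E|E].
  - rewrite E, Rmult_0_r. unfold Rdiv. rewrite Rinv_0, !Rmult_0_r. reflexivity.
  - field. split; lra.
Qed.

Lemma wlog_scale n x1 x2 x3 (g : quat) : g <> qzero ->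
  let x2' := fun i => qmul g (x2 i) in
  (forall z, in_Sigma n x1 x2 z <-> in_Sigma n x1 x2' z) /\
  (forall z, in_sigma n x1 x2 z <-> in_sigma n x1 x2' z) /\
  abs_tan_angleH n x1 x2' x3 = abs_tan_angleH n x1 x2 x3.
Proof.
  intros Hg x2'.
  assert (Hlc : forall a b', lincomb a x1 b' x2' = lincomb a x1 (qmul b' g) x2).
  { intros; apply functional_extensionality; intro i; unfold lincomb, x2'; qring. }
  assert (Hh : herm n x1 x2' = qmul (herm n x1 x2) (qconj g)) by (apply herm_scale_r).
  assert (Hq : forall a b', qmul (qmul a (herm n x1 x2')) (qconj b') = qmul (qmul a (herm n x1 x2)) (qconj (qmul b' g))).
  { intros. rewrite Hh. qring. }
  assert (Hbg : forall b, qmul (qmul b (qinv g)) g = b).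
  { intros. rewrite <- qmul_assoc, qmul_inv_l, qmul_1r; auto. }
  split; [|split].
  - intro z. split.
    + intros [Hz [a [b Hs]]]. split; auto. exists a, (qmul b (qinv g)). rewrite Hlc, Hbg. auto.
    + intros [Hz [a [b Hs]]]. split; auto. exists a, (qmul b g). rewrite <- Hlc. auto.
  - intro z. split.
    + intros [Hz [a [b [Hs [Hr Hn]]]]]. split; auto. exists a, (qmul b (qinv g)). rewrite Hlc, Hq, Hbg. auto.
    + intros [Hz [a [b [Hs [Hr Hn]]]]]. split; auto. exists a, (qmul b g). rewrite <- Hlc, <- Hq. auto.
  - unfold abs_tan_angleH, angleH.
    assert (Ht : triple n x1 x2' x3 = qmul (qscal (qnorm2 g)) (triple n x1 x2 x3)).
    { unfold triple. rewrite Hh. unfold x2'. rewrite herm_scale_l. qring. }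
    rewrite Ht, angleH_scale. reflexivity. apply qnorm2_pos; auto.
Qed.

Theorem theorem3p4 (n : nat) (x1 x2 x3 : qvec) :
  (1 <= n)%nat ->
  nullvec n x1 -> nullvec n x2 -> nullvec n x3 ->
  ~ same_line n x1 x2 -> ~ same_line n x1 x3 -> ~ same_line n x2 x3 ->
  forall (y p : nat -> qvec),
    (forall k, negvec n (y k)) ->
    conv_to n y x3 ->
    (forall k, nearest_in_Sigma n x1 x2 (y k) (p k)) ->
    is_lim_seq (fun k => sinh (dist_to_sigma n x1 x2 (p k)))
               (abs_tan_angleH n x1 x2 x3).
Proof.
  intros _ N1 N2 N3 S12 S13 S23 y p Hy Hc Hp.
  assert (Hh : herm n x1 x2 <> qzero) by (intro E; apply S12, null_orth; auto).
  assert (H31 : herm n x3 x1 <> qzero).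
  { intro E. apply S13, null_orth; auto. rewrite herm_conj, E; qring. }
  assert (H32 : herm n x3 x2 <> qzero).
  { intro E. apply S23, null_orth; auto. rewrite herm_conj, E; qring. }
  set (h := herm n x1 x2) in *.
  set (g := qmul (qscal (- / qnorm2 h)) h).
  pose proof (qnorm2_pos h Hh) as Hnh.
  assert (Hg : g <> qzero).
  { unfold g. apply qmul_nz; auto. intro E. apply (f_equal qre) in E. unfold qscal, qzero in E; cbn [qre] in E.
    assert (0 < / qnorm2 h) by (apply Rinv_0_lt_compat; auto). lra. }
  destruct (wlog_scale n x1 x2 x3 g Hg) as [W1 [W2 W3]].
  set (x2' := fun i => qmul g (x2 i)) in *.
  rewrite <- W3.
  assert (Hd : forall z, dist_to_sigma n x1 x2 z = dist_to_sigma n x1 x2' z).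
  { intro z. unfold dist_to_sigma. f_equal. apply Glb_Rbar_eqset. intro r.
    split; intros [q [Hq E]]; exists q; split; auto; apply W2; auto. }
  apply (is_lim_seq_ext (fun k => sinh (dist_to_sigma n x1 x2' (p k)))).
  { intro k; rewrite Hd; auto. }
  apply core with (y := y); auto.
  - destruct N1; auto.
  - unfold x2'. rewrite herm_scale_l, herm_scale_r. destruct N2 as [_ ->]. qring.
  - unfold x2'. rewrite herm_scale_r. fold h. unfold g. apply quat_eq; qunf; field; lra.
  - unfold x2'. rewrite herm_scale_r. apply qmul_nz; auto. apply qconj_nz; auto.
  - intro k. destruct (Hp k) as [Hs Hm]. split. apply W1; auto.
    intros q Hq. apply Hm, W1; auto.
Qed.
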